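(* Let $\widehat{\mathcal{A}}$ be the algebra of formal power series in variables $a,b$ satisfying $ab-ba=b^2$. The $\mathbb{C}$-vector space $$\tilde{\mathcal{A}}_{conv.}:=\Big\{\sum_{p,q}\gamma_{p,q}a^pb^q\ :\ \exists R>1,\ \exists C_R\ \text{such that}\ |\gamma_{p,q}|\le C_RR^{p+q}q!\ \ \forall p,q\Big\}$$ is a subalgebra of $\widehat{\mathcal{A}}$. Moreover $$\tilde{\mathcal{A}}_{conv.}=\Big\{\sum_{p,q}\delta_{p,q}b^qa^p\ :\ \exists R>1,\ \exists D_R\ \text{such that}\ |\delta_{p,q}|\le D_RR^{p+q}q!\ \ \forall p,q\Big\}.$$
   Context: $\mathcal{A}_0$ denotes the $\mathbb{C}$-algebra of polynomials in $a,b$ subject to $ab-ba=b^2$. $\widehat{\mathcal{A}}$ is its completion for the $(a,b)$-adic topology, i.e. the algebra of formal series whose elements can be uniquely written $\sum_{p,q\ge0}\gamma_{p,q}a^pb^q$ and also uniquely $\sum_{p,q\ge0}\delta_{p,q}b^qa^p$, with product extending that of $\mathcal{A}_0$ continuously for the $(a,b)$-adic topology. *)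

(* Defs.v *)
From HB Require Import structures.
From mathcomp Require Import all_boot all_order all_algebra.
From mathcomp Require Import complex.
From mathcomp Require Import Rstruct.
Set Implicit Arguments. Unset Strict Implicit. Unset Printing Implicit Defensive.
Import Order.TTheory GRing.Theory Num.Theory.
Local Open Scope ring_scope.

Definition Cx : Type := complex Rdefinitions.R.

(* A formal series in \widehat{A} is represented by its (unique) coefficient
   family gamma in the normal-ordered basis a^p b^q :  sum gamma p q a^p b^q. *)
Definition series := nat -> nat -> Cx.

(* Normal ordering in A_0 (ab - ba = b^2):
   b^q a^p = sum_{i,j} Nord q p i j  a^i b^j.
   Recursion: b^j a = a b^j - j b^(j+1), hence
   b^q a^(p+1) = sum Nord q p i j a^i (a b^j - j b^(j+1)). *)
Fixpoint Nord (q p i j : nat) : Cx :=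
  match p with
  | 0 => if (i == 0)%N && (j == q) then 1 else 0
  | p'.+1 =>
      (if i is i'.+1 then Nord q p' i' j else 0)
      - (if j is j'.+1 then j'%:R * Nord q p' i j' else 0)
  end.

Definition sone : series := fun P Q => if (P == 0)%N && (Q == 0)%N then 1 else 0.

Definition sadd (g h : series) : series := fun P Q => g P Q + h P Q.
Definition sscale (c : Cx) (g : series) : series := fun P Q => c * g P Q.

(* Product in \widehat{A}: (a^p1 b^q1)(a^p2 b^q2) = a^p1 (b^q1 a^p2) b^q2
   = sum_{i,j} Nord q1 p2 i j a^(p1+i) b^(j+q2).  Since the relation is
   homogeneous, Nord q1 p2 i j = 0 unless i + j = q1 + p2 (and i <= p2), so
   only indices < P+Q+1 contribute to the coefficient of a^P b^Q: the sum
   below is the (finite) coefficient of the continuous extension. *)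
Definition smul (g h : series) : series := fun P Q =>
  let M := (P + Q).+1 in
  \sum_(p1 < M) \sum_(q1 < M) \sum_(p2 < M) \sum_(q2 < M) \sum_(i < M) \sum_(j < M)
    (if (p1 + i == P)%N && (j + q2 == Q)%N
     then g p1 q1 * h p2 q2 * Nord q1 p2 i j else 0).

(* The series sum_{p,q} delta p q b^q a^p (anti-normal ordering), written in
   the normal-ordered coefficients: only p + q = i + j contributes. *)
Definition of_antinormal (d : series) : series := fun i j =>
  let M := (i + j).+1 in
  \sum_(p < M) \sum_(q < M) d p q * Nord q p i j.

Definition conv_bound (c : series) : Prop :=
  exists (R CR : Rdefinitions.R), 1 < R /\
    forall p q : nat, `|c p q| <= real_complex Rdefinitions.R (CR * R ^+ (p + q) * (q`!)%:R).

Definition Aconv (g : series) : Prop := conv_bound g.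

(* Main.v *)
Require Import Defs.
From HB Require Import structures.
From mathcomp Require Import all_boot all_order all_algebra.
From mathcomp Require Import complex.
From mathcomp Require Import Rstruct.
From mathcomp Require Import ring lra zify.
From Stdlib Require Import FunctionalExtensionality.
Set Implicit Arguments. Unset Strict Implicit. Unset Printing Implicit Defensive.
Import Order.TTheory GRing.Theory Num.Theory.
Local Open Scope ring_scope. Local Open Scope complex_scope.
Local Notation RR := Rdefinitions.R.
Definition nrm (z : Cx) : RR := complex.Re `|z|.
Lemma nC (z : Cx) : `|z| = (nrm z)%:C.
Proof. by rewrite /nrm RRe_real // normr_real. Qed.
Lemma nrm_ge0 z : 0 <= nrm z.
Proof. by rewrite -ler0c -nC. Qed.
Lemma nrmM x y : nrm (x * y) = nrm x * nrm y.
Proof. by apply: complexI; rewrite rmorphM /= -!nC normrM. Qed.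
Lemma nrmD x y : nrm (x + y) <= nrm x + nrm y.
Proof. by rewrite -lecR rmorphD /= -!nC ler_normD. Qed.
Lemma nrmB x y : nrm (x - y) <= nrm x + nrm y.
Proof. by rewrite -lecR rmorphD /= -!nC ler_normB. Qed.
Lemma nrm_nat n : nrm n%:R = n%:R.
Proof. by apply: complexI; rewrite -nC rmorph_nat normr_nat. Qed.
Lemma nrm_sum I (r : seq I) (P : pred I) (F : I -> Cx) :
  nrm (\sum_(i <- r | P i) F i) <= \sum_(i <- r | P i) nrm (F i).
Proof.
have h : `|\sum_(i <- r | P i) F i| <= \sum_(i <- r | P i) `|F i| := ler_norm_sum _ _ _. rewrite nC in h.
have E : \sum_(i <- r | P i) `|F i| = (\sum_(i <- r | P i) nrm (F i))%:C.
  by rewrite rmorph_sum; apply: eq_bigr => i _; rewrite nC.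
by rewrite E lecR in h. Qed.
Lemma nrm0 : nrm 0 = 0. Proof. by rewrite -[0 in LHS](mulr0n 1) nrm_nat. Qed.
Lemma conv_boundE c : conv_bound c <-> exists (R CR : RR), 1 < R /\ forall p q, nrm (c p q) <= CR * R ^+ (p + q) * (q`!)%:R.
Proof.
split=> -[R [CR [h1 h2]]]; exists R, CR; split=> // p q; move: (h2 p q).
  by rewrite nC lecR.
by rewrite -lecR -nC.
Qed.

Fixpoint Inv (j i p q : nat) : Cx :=
  match i with
  | 0 => if (p == 0)%N && (q == j) then 1 else 0
  | i'.+1 =>
      (if p is p'.+1 then Inv j i' p' q else 0)
      + (if q is q'.+1 then q'%:R * Inv j i' p q' else 0)
  end.

Lemma sub_neq0 (x y : Cx) : x - y != 0 -> x != 0 \/ y != 0.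
Proof. by case: (eqVneq x 0) => [->|]; [rewrite sub0r oppr_eq0; right | left]. Qed.
Lemma add_neq0 (x y : Cx) : x + y != 0 -> x != 0 \/ y != 0.
Proof. by case: (eqVneq x 0) => [->|]; [rewrite add0r; right | left]. Qed.
Lemma mul_neq0 (x y : Cx) : x * y != 0 -> y != 0.
Proof. by apply: contra => /eqP ->; rewrite mulr0. Qed.

Lemma Nord_supp p q i j : Nord q p i j != 0 -> (i + j = p + q)%N.
Proof.
elim: p i j => [|p IH] i j /=.
  by case: ifP => [/andP[/eqP -> /eqP ->]|]; rewrite ?eqxx.
move/sub_neq0 => [].
  by case: i => [|i]; rewrite ?eqxx // => /IH; lia.
by case: j => [|j]; rewrite ?eqxx // => /mul_neq0 /IH; lia.
Qed.

Lemma Inv_supp i j p q : Inv j i p q != 0 -> (p + q = i + j)%N.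
Proof.
elim: i p q => [|i IH] p q /=.
  by case: ifP => [/andP[/eqP -> /eqP ->]|]; rewrite ?eqxx.
move/add_neq0 => [].
  by case: p => [|p]; rewrite ?eqxx // => /IH; lia.
by case: q => [|q]; rewrite ?eqxx // => /mul_neq0 /IH; lia.
Qed.

Lemma Nord_bound p q i j : nrm (Nord q p i j) * (q`!)%:R <= (2^p * j`!)%:R :> RR.
Proof.
elim: p i j => [|p IH] i j /=.
  case: ifP => [/andP[_ /eqP ->]|_]; last by rewrite nrm0 mul0r ler0n.
  by rewrite -[1](mulr1n) nrm_nat mul1r expn0 mul1n.
have hA : nrm (if i is i'.+1 then Nord q p i' j else 0) * (q`!)%:R <= (2^p * j`!)%:R :> RR.
  by case: i => [|i]; rewrite ?nrm0 ?mul0r ?ler0n ?IH.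
have hB : nrm (if j is j'.+1 then j'%:R * Nord q p i j' else 0) * (q`!)%:R <= (2^p * j`!)%:R :> RR.
  clear hA; case: j => [|j]; first by rewrite nrm0 mul0r ler0n.
  rewrite nrmM nrm_nat -mulrA; apply: le_trans (ler_wpM2l (ler0n _ j) (IH i j)) _.
  by rewrite -natrM ler_nat factS; nia.
apply: le_trans (ler_wpM2r (ler0n _ _) (nrmB _ _)) _.
have -> : (2^p.+1 * j`!)%:R = (2^p*j`!)%:R + (2^p*j`!)%:R :> RR.
  by rewrite -natrD expnS; congr _%:R; lia.
by rewrite mulrDl lerD.
Qed.

Lemma Inv_bound i j p q : nrm (Inv j i p q) * (j`!)%:R <= (2^i * q`!)%:R :> RR.
Proof.
elim: i p q => [|i IH] p q /=.
  case: ifP => [/andP[_ /eqP ->]|_]; last by rewrite nrm0 mul0r ler0n.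
  by rewrite -[1](mulr1n) nrm_nat mul1r expn0 mul1n.
have hA : nrm (if p is p'.+1 then Inv j i p' q else 0) * (j`!)%:R <= (2^i * q`!)%:R :> RR.
  by case: p => [|p]; rewrite ?nrm0 ?mul0r ?ler0n ?IH.
have hB : nrm (if q is q'.+1 then q'%:R * Inv j i p q' else 0) * (j`!)%:R <= (2^i * q`!)%:R :> RR.
  clear hA; case: q => [|q]; first by rewrite nrm0 mul0r ler0n.
  rewrite nrmM nrm_nat -mulrA; apply: le_trans (ler_wpM2l (ler0n _ q) (IH p q)) _.
  by rewrite -natrM ler_nat factS; nia.
apply: le_trans (ler_wpM2r (ler0n _ _) (nrmD _ _)) _.
have -> : (2^i.+1 * q`!)%:R = (2^i*q`!)%:R + (2^i*q`!)%:R :> RR.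
  by rewrite -natrD expnS; congr _%:R; lia.
by rewrite mulrDl lerD.
Qed.

Lemma NordS q p i j : Nord q p.+1 i j =
  (if i is i'.+1 then Nord q p i' j else 0)
      - (if j is j'.+1 then j'%:R * Nord q p i j' else 0).
Proof. by []. Qed.

Lemma Nord_shift p q i j :
  Nord q p.+1 i j + q%:R * Nord q.+1 p i j = (if i is i'.+1 then Nord q p i' j else 0).
Proof.
elim: p i j => [|p IH] i j.
  rewrite /=; case: i => [|[|i]]; case: j => [|j] /=; rewrite ?mulr0 ?subr0 ?addr0 ?sub0r //.
  all: try (rewrite ?mulr0 ?oppr0 ?add0r ?addr0 //; fail).
  case: (eqVneq j q) => [->|]; first by rewrite !eqxx /= mulr1 addrC subrr.
  by move=> /negbTE hj; rewrite eqSS hj /= !mulr0 oppr0 add0r.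
rewrite (NordS q p.+1 i j) (NordS q.+1 p i j).
case: i => [|i]; case: j => [|j].
- by rewrite !subr0 mulr0 addr0.
- have h := IH 0%N j.
  transitivity (- (j%:R * (Nord q p.+1 0 j + q%:R * Nord q.+1 p 0 j))).
    by ring.
  by rewrite h mulr0 oppr0.
- by rewrite !subr0 IH NordS subr0.
- have h1 := IH i j.+1; have h2 := IH i.+1 j.
  transitivity ((Nord q p.+1 i j.+1 + q%:R * Nord q.+1 p i j.+1) - j%:R * (Nord q p.+1 i.+1 j + q%:R * Nord q.+1 p i.+1 j)).
    by ring.
  by rewrite h1 h2 NordS.
Qed.

Definition Tsum K j' i' i j := \sum_(0 <= p < K) \sum_(0 <= q < K) Inv j' i' p q * Nord q p i j.

Lemma sum_ind K j (F : nat -> Cx) : (j < K)%N ->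
  \sum_(0 <= q < K) (if q == j then F q else 0) = F j.
Proof.
elim: K => [|K IH] //; rewrite big_nat_recr //= ltnS leq_eqVlt => /orP[/eqP ->|hj].
  rewrite big1_seq ?add0r ?eqxx // => q /andP[_]; rewrite mem_index_iota => /andP[_ hq].
  by rewrite ifN // neq_ltn hq.
by rewrite IH // ifN ?addr0 // neq_ltn hj orbT.
Qed.

Lemma InvS j i p q : Inv j i.+1 p q =
      (if p is p'.+1 then Inv j i p' q else 0)
      + (if q is q'.+1 then q'%:R * Inv j i p q' else 0).
Proof. by []. Qed.

Lemma T_id i' j' K i j : (i' + j' < K)%N ->
  Tsum K j' i' i j = if (i == i') && (j == j') then 1 else 0.
Proof.
rewrite /Tsum.
case: K => [//|K].
elim: i' i j => [|i' IH] i j hK.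
  rewrite big_nat_recl //.
  rewrite [X in _ + X = _]big1 ?addr0; last first.
    by move=> p _; rewrite big1 // => q _ /=; rewrite mul0r.
  rewrite (eq_bigr (fun q => if q == j' then Nord j' 0 i j else 0)); last first.
    by move=> q _ /=; case: eqP => [->|]; rewrite ?mul1r ?mul0r.
  by rewrite sum_ind //=; lia.
have hz : forall p q, (K <= p)%N || (K <= q)%N -> Inv j' i' p q = 0.
  move=> p q h; apply/eqP; apply: contraT => /Inv_supp; lia.
under eq_bigr => p _ do under eq_bigr => q _ do rewrite InvS mulrDl.
under eq_bigr => p _ do rewrite big_split /=.
rewrite big_split /=.
rewrite big_nat_recl // big1 ?add0r; last by move=> q _; rewrite mul0r.
rewrite [X in X + _](_ : _ = \sum_(0 <= p < K.+1) \sum_(0 <= q < K.+1) Inv j' i' p q * Nord q p.+1 i j); last first.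
  rewrite big_nat_recr //= [X in _ = _ + X]big1 ?addr0 // => q _.
  by rewrite hz ?leqnn // mul0r.
rewrite [X in _ + X](_ : _ = \sum_(0 <= p < K.+1) \sum_(0 <= q < K.+1) Inv j' i' p q * (q%:R * Nord q.+1 p i j)); last first.
  apply: eq_bigr => p _.
  rewrite big_nat_recl // mul0r add0r big_nat_recr //= hz ?leqnn ?orbT // mul0r addr0.
  by apply: eq_bigr => q _; rewrite [_%:R * _]mulrC -mulrA.
rewrite -big_split /=.
under eq_bigr => p _ do rewrite -big_split /=.
under eq_bigr => p _ do under eq_bigr => q _ do rewrite -mulrDr Nord_shift.
case: i => [|i].
  by rewrite big1 // => p _; rewrite big1 // => q _; rewrite mulr0.
by rewrite IH ?eqSS //; lia.
Qed.

Lemma nrm_sum_ord M (F : 'I_M -> Cx) (B : RR) :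
  (forall k, nrm (F k) <= B) -> nrm (\sum_(k < M) F k) <= M%:R * B.
Proof.
move=> h; apply: le_trans (nrm_sum _ _ _) _.
apply: le_trans (ler_sum _ (fun k _ => h k)) _.
by rewrite sumr_const card_ord mulr_natl.
Qed.

Lemma nrm_sum_nat M (F : nat -> Cx) (B : RR) :
  (forall k, (k < M)%N -> nrm (F k) <= B) -> nrm (\sum_(0 <= k < M) F k) <= M%:R * B.
Proof. by move=> h; rewrite big_mkord; apply: nrm_sum_ord => k; apply: h. Qed.

Lemma powle (X Y : RR) a b : 0 <= X -> X <= Y -> 1 <= Y -> (a <= b)%N -> X ^+ a <= Y ^+ b.
Proof.
move=> h0 hXY hY hab; apply: le_trans (lerXn2r _ _ _ hXY) _; rewrite ?nnegrE //.
  by apply: le_trans hY.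
exact: ler_weXn2l.
Qed.

Lemma fact_mul a b : (a`! * b`! <= (a + b)`!)%N.
Proof.
have := bin_fact (leq_addl a b); rewrite addnK => <-.
have : (0 < 'C(a + b, b))%N by rewrite bin_gt0 leq_addl.
by nia.
Qed.

Lemma mkconv c (K X : RR) : 0 <= K -> 0 <= X ->
  (forall p q, nrm (c p q) <= K * X ^+ (p + q) * (q`!)%:R) -> conv_bound c.
Proof.
move=> hK hX h; apply/conv_boundE; exists (X + 2), K; split; first by lra.
move=> p q; apply: le_trans (h p q) _.
apply: ler_wpM2r; first exact: ler0n.
apply: ler_wpM2l => //; apply: lerXn2r; rewrite ?nnegrE //; lra.
Qed.

Lemma conv_getK c : conv_bound c -> exists K X : RR, [/\ 0 <= K, 1 <= X &
  forall p q, nrm (c p q) <= K * X ^+ (p + q) * (q`!)%:R].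
Proof.
move/conv_boundE => [R [CR [hR h]]]; exists CR, R; split => //; last exact: ltW.
by have := h 0%N 0%N; rewrite expr0 mulr1 fact0 mulr1; apply: le_trans; apply: nrm_ge0.
Qed.

Lemma n1_le_pow (n : nat) (Y : RR) : 2 <= Y -> n.+1%:R <= Y ^+ n.
Proof.
move=> hY; apply: (@le_trans _ _ ((2 ^ n)%N%:R)).
  by rewrite ler_nat ltn_expl.
rewrite natrX; apply: lerXn2r; rewrite ?nnegrE //; lra.
Qed.

Lemma eqle (x y : RR) : x = y -> x <= y. Proof. by move->. Qed.

Lemma mono5 (k a b t f a' b' t' f' : RR) : 0 <= k -> 0 <= a -> 0 <= b -> 0 <= t -> 0 <= f ->
  a <= a' -> b <= b' -> t <= t' -> f <= f' -> k * a * b * t * f <= k * a' * b' * t' * f'.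
Proof.
move=> hk ha hb ht hf h1 h2 h3 h4.
apply: ler_pM; rewrite ?mulr_ge0 //.
apply: ler_pM; rewrite ?mulr_ge0 //.
apply: ler_pM; rewrite ?mulr_ge0 //.
by apply: ler_pM.
Qed.

Lemma smul_conv g h : conv_bound g -> conv_bound h -> conv_bound (smul g h).
Proof.
move=> /conv_getK [K1 [X1 [hK1 hX1 hg]]] /conv_getK [K2 [X2 [hK2 hX2 hh]]].
set Y := X1 + X2.
have hY2 : 2 <= Y by rewrite /Y; lra.
have hY1 : 1 <= Y by lra.
have hY0 : 0 <= Y by lra.
apply: (@mkconv _ (K1 * K2) (Y ^+ 11)); rewrite ?mulr_ge0 ?exprn_ge0 //.
move=> P Q; set n := (P + Q)%N.
set B := K1 * K2 * Y ^+ (5 * n) * (Q`!)%:R.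
have hB0 : 0 <= B by rewrite /B !mulr_ge0 ?exprn_ge0 ?ler0n.
have tb : forall p1 q1 p2 q2 i j : 'I_n.+1,
  nrm (if (p1 + i == P)%N && (j + q2 == Q)%N
     then g p1 q1 * h p2 q2 * Nord q1 p2 i j else 0) <= B.
  move=> p1 q1 p2 q2 i j.
  case: ifP => [/andP[/eqP e1 /eqP e2]|_]; last by rewrite nrm0.
  have l1 := ltn_ord p1; have l2 := ltn_ord q1; have l3 := ltn_ord p2.
  have l4 := ltn_ord q2; have l5 := ltn_ord i; have l6 := ltn_ord j.
  rewrite !nrmM.
  have h1 := hg p1 q1; have h2 := hh p2 q2; have h3 := Nord_bound p2 q1 i j.
  apply: (@le_trans _ _ ((K1 * X1 ^+ (p1 + q1) * (q1`!)%:R) * (K2 * X2 ^+ (p2 + q2) * (q2`!)%:R) * nrm (Nord q1 p2 i j))).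
    by apply: ler_pM; rewrite ?nrm_ge0 // ?mulr_ge0 ?nrm_ge0 //; apply: ler_pM; rewrite ?nrm_ge0.
  apply: (@le_trans _ _ (K1 * K2 * X1 ^+ (p1 + q1) * X2 ^+ (p2 + q2) * (q2`!)%:R * (nrm (Nord q1 p2 i j) * (q1`!)%:R))).
    by apply: eqle; ring.
  apply: (@le_trans _ _ (K1 * K2 * X1 ^+ (p1 + q1) * X2 ^+ (p2 + q2) * (q2`!)%:R * (2 ^ p2 * j`!)%:R)).
    by apply: ler_wpM2l => //; rewrite !mulr_ge0 ?exprn_ge0 ?ler0n //; lra.
  apply: (@le_trans _ _ ((K1 * K2) * X1 ^+ (p1 + q1) * X2 ^+ (p2 + q2) * 2 ^+ p2 * ((j`! * q2`!)%N%:R))).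
    by apply: eqle; rewrite !natrM natrX; ring.
  rewrite /B (_ : Y ^+ (5 * n) = Y ^+ (2 * n) * Y ^+ (2 * n) * Y ^+ n); last first.
    by rewrite -!exprD; congr (_ ^+ _); lia.
  rewrite !mulrA.
  apply: mono5; rewrite ?mulr_ge0 ?exprn_ge0 ?ler0n //; try lra.
  - by apply: powle => //; rewrite /Y; first [lra | lia].
  - by apply: powle => //; rewrite /Y; first [lra | lia].
  - by apply: powle => //; rewrite /Y; first [lra | lia].
  - by rewrite ler_nat -e2 fact_mul.
rewrite /smul /=.
apply: (@le_trans _ _ (n.+1%:R * (n.+1%:R * (n.+1%:R * (n.+1%:R * (n.+1%:R * (n.+1%:R * B))))))).
  do 6 (apply: nrm_sum_ord => ?).
  exact: tb.
have hn := n1_le_pow n hY2.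
apply: (@le_trans _ _ (Y ^+ n * (Y ^+ n * (Y ^+ n * (Y ^+ n * (Y ^+ n * (Y ^+ n * B))))))).
  by do 6 (apply: ler_pM; rewrite ?ler0n ?mulr_ge0 ?exprn_ge0 //).
apply: eqle; rewrite /B -exprM.
rewrite (_ : (11 * n)%N = n + (n + (n + (n + (n + (n + 5 * n))))))%N; last by lia.
rewrite !exprD; ring.
Qed.

Lemma T_id' i' j' K i j : (i + j < K)%N ->
  Tsum K j' i' i j = if (i == i') && (j == j') then 1 else 0.
Proof.
move=> hK; case: (ltnP (i' + j') K) => h; first exact: T_id.
have -> : (i == i') && (j == j') = false.
  by apply/negP => /andP[/eqP e1 /eqP e2]; move: h hK; rewrite e1 e2; lia.
rewrite /Tsum big1 // => p _; rewrite big1 // => q _.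
case: (eqVneq (Inv j' i' p q) 0) => [->|/Inv_supp e1]; first by rewrite mul0r.
case: (eqVneq (Nord q p i j) 0) => [->|/Nord_supp e2]; first by rewrite mulr0.
by move: h hK; lia.
Qed.

Lemma ex4 M (F : 'I_M -> 'I_M -> 'I_M -> 'I_M -> Cx) :
  \sum_(p < M) \sum_(q < M) \sum_(a < M) \sum_(b < M) F p q a b =
  \sum_(a < M) \sum_(b < M) \sum_(p < M) \sum_(q < M) F p q a b.
Proof.
under eq_bigr => p _ do rewrite exchange_big.
under eq_bigr => p _ do under eq_bigr => a _ do rewrite exchange_big.
rewrite exchange_big.
by under eq_bigr => a _ do rewrite exchange_big.
Qed.

Definition dinv (g : series) : series := fun p q =>
  \sum_(i' < (p + q).+1) \sum_(j' < (p + q).+1) g i' j' * Inv j' i' p q.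

Lemma dinv_eq g : g = of_antinormal (dinv g).
Proof.
apply: functional_extensionality => i; apply: functional_extensionality => j.
rewrite /of_antinormal /=; set M := (i + j).+1.
have step1 : forall p q : nat, dinv g p q * Nord q p i j =
    \sum_(i' < M) \sum_(j' < M) g i' j' * Inv j' i' p q * Nord q p i j.
  move=> p q; case: (eqVneq (Nord q p i j) 0) => [->|/Nord_supp e].
    by rewrite mulr0 big1 // => i' _; rewrite big1 // => j' _; rewrite mulr0.
  rewrite /dinv /M e mulr_suml; apply: eq_bigr => i' _; by rewrite mulr_suml.
under eq_bigr => p _ do under eq_bigr => q _ do rewrite step1.
rewrite ex4.
have step2 : forall i' j' : nat,
    \sum_(p < M) \sum_(q < M) g i' j' * Inv j' i' p q * Nord q p i j
    = g i' j' * (if (i == i') && (j == j') then 1 else 0).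
  move=> i' j'; rewrite -(@T_id' i' j' M) // /Tsum big_mkord mulr_sumr; apply: eq_bigr => p _.
  by rewrite big_mkord mulr_sumr; apply: eq_bigr => q _; rewrite mulrA.
under eq_bigr => i' _ do under eq_bigr => j' _ do rewrite step2.
have hi : (i < M)%N by rewrite /M; lia.
have hj : (j < M)%N by rewrite /M; lia.
rewrite (bigD1 (Ordinal hi)) //= [X in _ + X]big1 ?addr0; last first.
  move=> i' hi'; rewrite big1 // => j' _.
  have -> : (i == i') = false.
    apply/negP => /eqP e; move/negP: hi'; apply; apply/eqP/val_inj; by rewrite /= e.
  by rewrite mulr0.
rewrite (bigD1 (Ordinal hj)) //= [X in _ + X]big1 ?addr0; last first.
  move=> j' hj'.
  have -> : (j == j') = false.
    apply/negP => /eqP e; move/negP: hj'; apply; apply/eqP/val_inj; by rewrite /= e.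
  by rewrite andbF mulr0.
by rewrite !eqxx mulr1.
Qed.

Lemma sone_conv : conv_bound sone.
Proof.
apply: (@mkconv _ 1 1) => // p q; rewrite expr1n !mul1r /sone.
case: ifP => _; last by rewrite nrm0 ler0n.
by rewrite -[1](mulr1n) nrm_nat ler1n fact_gt0.
Qed.

Lemma sadd_conv g h : conv_bound g -> conv_bound h -> conv_bound (sadd g h).
Proof.
move=> /conv_getK [K1 [X1 [hK1 hX1 hg]]] /conv_getK [K2 [X2 [hK2 hX2 hh]]].
apply: (@mkconv _ (K1 + K2) (X1 + X2)); try lra.
move=> p q; apply: le_trans (nrmD _ _) _; rewrite !mulrDl.
apply: lerD.
  apply: le_trans (hg p q) _; apply: ler_wpM2r; rewrite ?ler0n //; apply: ler_wpM2l => //.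
  by apply: powle => //; lra.
apply: le_trans (hh p q) _; apply: ler_wpM2r; rewrite ?ler0n //; apply: ler_wpM2l => //.
by apply: powle => //; lra.
Qed.

Lemma sscale_conv c g : conv_bound g -> conv_bound (sscale c g).
Proof.
move=> /conv_getK [K [X [hK hX hg]]].
apply: (@mkconv _ (nrm c * K) X); rewrite ?mulr_ge0 ?nrm_ge0 //; try lra.
move=> p q; rewrite /sscale nrmM -!mulrA; apply: ler_wpM2l; first exact: nrm_ge0.
by rewrite !mulrA.
Qed.

Lemma anti_conv d : conv_bound d -> conv_bound (of_antinormal d).
Proof.
move=> /conv_getK [K [X [hK hX hd]]].
set Y := X + 1.
have hY2 : 2 <= Y by rewrite /Y; lra.
have hY0 : 0 <= Y by lra.
apply: (@mkconv _ K (Y ^+ 5)); rewrite ?exprn_ge0 //; try lra.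
move=> i j; set n := (i + j)%N.
set B := K * Y ^+ (3 * n) * (j`!)%:R.
rewrite /of_antinormal /= -/n.
apply: (@le_trans _ _ (n.+1%:R * (n.+1%:R * B))).
  apply: nrm_sum_ord => p; apply: nrm_sum_ord => q.
  have l1 := ltn_ord p; have l2 := ltn_ord q.
  rewrite nrmM.
  apply: (@le_trans _ _ (K * X ^+ (p + q) * ((q`!)%:R * nrm (Nord q p i j)))).
    by rewrite mulrA; apply: ler_wpM2r; rewrite ?nrm_ge0.
  apply: (@le_trans _ _ (K * X ^+ (p + q) * (2 ^ p * j`!)%:R)).
    apply: ler_wpM2l; first by rewrite ?mulr_ge0 ?exprn_ge0 //; lra.
    by rewrite mulrC Nord_bound.
  rewrite /B (_ : Y ^+ (3 * n) = Y ^+ (2 * n) * Y ^+ n); last first.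
    by rewrite -!exprD; congr (_ ^+ _); lia.
  rewrite natrM natrX !mulrA.
  apply: ler_wpM2r; rewrite ?ler0n //.
  rewrite -!mulrA; apply: ler_wpM2l => //.
  apply: ler_pM; rewrite ?exprn_ge0 //; try lra.
    by apply: powle => //; rewrite /Y; first [lra | lia].
  by apply: powle => //; rewrite /Y; first [lra | lia].
have hn := n1_le_pow n hY2.
have hB0 : 0 <= B by rewrite /B !mulr_ge0 ?exprn_ge0 ?ler0n //; lra.
apply: (@le_trans _ _ (Y ^+ n * (Y ^+ n * B))).
  by do 2 (apply: ler_pM; rewrite ?ler0n ?mulr_ge0 ?exprn_ge0 //).
apply: eqle; rewrite /B -exprM.
rewrite (_ : (5 * n)%N = n + (n + 3 * n))%N; last by lia.
rewrite !exprD; ring.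
Qed.

Lemma dinv_conv g : conv_bound g -> conv_bound (dinv g).
Proof.
move=> /conv_getK [K [X [hK hX hd]]].
set Y := X + 1.
have hY2 : 2 <= Y by rewrite /Y; lra.
have hY0 : 0 <= Y by lra.
apply: (@mkconv _ K (Y ^+ 5)); rewrite ?exprn_ge0 //; try lra.
move=> p q; set n := (p + q)%N.
set B := K * Y ^+ (3 * n) * (q`!)%:R.
rewrite /dinv /= -/n.
apply: (@le_trans _ _ (n.+1%:R * (n.+1%:R * B))).
  apply: nrm_sum_ord => i; apply: nrm_sum_ord => j.
  have l1 := ltn_ord i; have l2 := ltn_ord j.
  rewrite nrmM.
  apply: (@le_trans _ _ (K * X ^+ (i + j) * ((j`!)%:R * nrm (Inv j i p q)))).
    by rewrite mulrA; apply: ler_wpM2r; rewrite ?nrm_ge0.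
  apply: (@le_trans _ _ (K * X ^+ (i + j) * (2 ^ i * q`!)%:R)).
    apply: ler_wpM2l; first by rewrite ?mulr_ge0 ?exprn_ge0 //; lra.
    by rewrite mulrC Inv_bound.
  rewrite /B (_ : Y ^+ (3 * n) = Y ^+ (2 * n) * Y ^+ n); last first.
    by rewrite -!exprD; congr (_ ^+ _); lia.
  rewrite natrM natrX !mulrA.
  apply: ler_wpM2r; rewrite ?ler0n //.
  rewrite -!mulrA; apply: ler_wpM2l => //.
  apply: ler_pM; rewrite ?exprn_ge0 //; try lra.
    by apply: powle => //; rewrite /Y; first [lra | lia].
  by apply: powle => //; rewrite /Y; first [lra | lia].
have hn := n1_le_pow n hY2.
have hB0 : 0 <= B by rewrite /B !mulr_ge0 ?exprn_ge0 ?ler0n //; lra.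
apply: (@le_trans _ _ (Y ^+ n * (Y ^+ n * B))).
  by do 2 (apply: ler_pM; rewrite ?ler0n ?mulr_ge0 ?exprn_ge0 //).
apply: eqle; rewrite /B -exprM.
rewrite (_ : (5 * n)%N = n + (n + 3 * n))%N; last by lia.
rewrite !exprD; ring.
Qed.

Theorem proposition1p1p3 :
  (* subalgebra of \widehat{A} *)
  (Aconv sone
   /\ (forall g h : series, Aconv g -> Aconv h -> Aconv (sadd g h))
   /\ (forall (c : Cx) (g : series), Aconv g -> Aconv (sscale c g))
   /\ (forall g h : series, Aconv g -> Aconv h -> Aconv (smul g h)))
  /\
  (* description in the anti-normal ordering b^q a^p *)
  (forall g : series,
     Aconv g <-> exists d : series, conv_bound d /\ g = of_antinormal d).
Proof.
split; first split; [exact: sone_conv | split; [exact: sadd_conv | split; [exact: sscale_conv | exact: smul_conv]] |].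
move=> g; split.
  by move=> hg; exists (dinv g); split; [exact: dinv_conv | exact: dinv_eq].
by move=> [d [hd ->]]; exact: anti_conv.
Qed.
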